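(* Let $\phi:\mathbb{R}^n\to[-\infty,\infty]$ be a proper nearly convex function, $\Theta\subset\mathbb{R}^n$ a nearly convex set, and $G:\mathbb{R}^n\rightrightarrows\mathbb{R}^q$ a nearly convex set-valued mapping. Suppose $$\operatorname{ri}(\operatorname{dom}\phi)\cap\operatorname{ri}(\operatorname{dom} G)\cap\operatorname{ri}\Theta\neq\emptyset\quad\text{and}\quad 0\in\operatorname{ri}\big(G(\Theta\cap\operatorname{dom}\phi)\big).$$ For $u^*\in\mathbb{R}^n$, $y^*\in\mathbb{R}^q$ let $v_G(x,y^* )=\inf\{\langle -y^*,y\rangle:y\in G(x)\}$ and $h_1(u^*,y^* )=-\phi^*(u^* )+\inf\{\langle u^*,x\rangle+v_G(x,y^* ):x\in\Theta\}$, the infimum understood as $\inf\{\langle u^*,x\rangle-\langle y^*,y\rangle:x\in\Theta,\ y\in G(x)\}$. Then $\mathcal{V}=\mathcal{V}_d$, where $\mathcal{V}=\inf\{\phi(x):x\in\Theta,\ 0\in G(x)\}$ and $\mathcal{V}_d=\sup\{h_1(u^*,y^* ):u^*\in\mathbb{R}^n,\ y^*\in\mathbb{R}^q\}$.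
   Context: A set $\Omega$ is nearly convex if there is a convex set $C$ with $C\subset\Omega\subset\overline{C}$; $\operatorname{ri}\Omega=\{a\in\Omega:\exists\delta>0,\ B(a;\delta)\cap\operatorname{aff}\Omega\subset\Omega\}$. A function is nearly convex if its epigraph is nearly convex, proper if its domain $\{\phi<\infty\}$ is nonempty and $\phi>-\infty$. Fenchel conjugate $\phi^*(u^* )=\sup_z\{\langle u^*,z\rangle-\phi(z)\}$. For $G:\mathbb{R}^n\rightrightarrows\mathbb{R}^q$: $\operatorname{dom}G=\{x:G(x)\neq\emptyset\}$, $G$ nearly convex if $\operatorname{gph}G=\{(x,y):y\in G(x)\}$ is; $G(S)=\bigcup_{x\in S}G(x)$. Convention $\inf\emptyset=\infty$. *)

(* Defs.v *)
From HB Require Import structures.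
From mathcomp Require Import all_boot all_order all_algebra.
From mathcomp Require Import all_classical all_reals all_analysis.
Set Implicit Arguments. Unset Strict Implicit. Unset Printing Implicit Defensive.
Import Order.TTheory GRing.Theory Num.Theory.
Import numFieldNormedType.Exports.
Local Open Scope classical_set_scope.
Local Open Scope ring_scope.

Section Defs.
Variable R : realType.

Definition dotp (m : nat) (u x : 'rV[R]_m) : R := \sum_(i < m) u 0 i * x 0 i.

Definition eball (m : nat) (a : 'rV[R]_m) (d : R) : set 'rV[R]_m :=
  [set x | \sum_(i < m) (x 0 i - a 0 i) ^+ 2 < d ^+ 2].

Definition aff (m : nat) (S : set 'rV[R]_m) : set 'rV[R]_m :=
  [set x | exists (k : nat) (w : 'I_k -> R) (p : 'I_k -> 'rV[R]_m),
     (forall i, S (p i)) /\ \sum_(i < k) w i = 1 /\ x = \sum_(i < k) w i *: p i].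

Definition ri (m : nat) (S : set 'rV[R]_m) : set 'rV[R]_m :=
  [set a | S a /\ exists d : R, 0 < d /\ eball a d `&` aff S `<=` S].

Definition convex1 {V : normedModType R} (C : set V) :=
  forall x y (t : R), C x -> C y -> 0 <= t <= 1 -> C (t *: x + (1 - t) *: y).

Definition nearly_convex1 {V : normedModType R} (S : set V) :=
  exists C : set V, convex1 C /\ C `<=` S /\ S `<=` closure C.

Definition convex2 {V W : normedModType R} (C : set (V * W)) :=
  forall x y (t : R), C x -> C y -> 0 <= t <= 1 ->
    C (t *: x.1 + (1 - t) *: y.1, t *: x.2 + (1 - t) *: y.2).

Definition nearly_convex2 {V W : normedModType R} (S : set (V * W)) :=
  exists C : set (V * W), convex2 C /\ C `<=` S /\ S `<=` closure C.

Definition edom (n : nat) (phi : 'rV[R]_n -> \bar R) : set 'rV[R]_n :=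
  [set x | (phi x < +oo)%E].

Definition proper_fun (n : nat) (phi : 'rV[R]_n -> \bar R) :=
  (exists x, (phi x < +oo)%E) /\ (forall x, (-oo < phi x)%E).

Definition epigraph (n : nat) (phi : 'rV[R]_n -> \bar R) : set ('rV[R]_n * R^o) :=
  [set p | (phi p.1 <= (p.2 : R)%:E)%E].

Definition nearly_convex_fun (n : nat) (phi : 'rV[R]_n -> \bar R) :=
  nearly_convex2 (epigraph phi).

Definition fconj (n : nat) (phi : 'rV[R]_n -> \bar R) (u : 'rV[R]_n) : \bar R :=
  ereal_sup [set ((dotp u z)%:E - phi z)%E | z in [set: 'rV[R]_n]].

Definition mdom (n q : nat) (G : 'rV[R]_n -> set 'rV[R]_q) : set 'rV[R]_n :=
  [set x | G x !=set0].

Definition gph (n q : nat) (G : 'rV[R]_n -> set 'rV[R]_q) : set ('rV[R]_n * 'rV[R]_q) :=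
  [set p | G p.1 p.2].

Definition nearly_convex_map (n q : nat) (G : 'rV[R]_n -> set 'rV[R]_q) :=
  nearly_convex2 (gph G).

Definition mimage (n q : nat) (G : 'rV[R]_n -> set 'rV[R]_q) (S : set 'rV[R]_n) :
  set 'rV[R]_q := \bigcup_(x in S) G x.

Definition h1 (n q : nat) (phi : 'rV[R]_n -> \bar R) (Theta : set 'rV[R]_n)
  (G : 'rV[R]_n -> set 'rV[R]_q) (u : 'rV[R]_n) (ys : 'rV[R]_q) : \bar R :=
  (- fconj phi u +
   ereal_inf [set (dotp u x.1 - dotp ys x.2)%:E |
                x in [set p : 'rV[R]_n * 'rV[R]_q | Theta p.1 /\ G p.1 p.2]])%E.

Definition primal_value (n q : nat) (phi : 'rV[R]_n -> \bar R) (Theta : set 'rV[R]_n)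
  (G : 'rV[R]_n -> set 'rV[R]_q) : \bar R :=
  ereal_inf [set phi x | x in [set x | Theta x /\ G x 0]].

Definition dual_value (n q : nat) (phi : 'rV[R]_n -> \bar R) (Theta : set 'rV[R]_n)
  (G : 'rV[R]_n -> set 'rV[R]_q) : \bar R :=
  ereal_sup [set h1 phi Theta G p.1 p.2 | p in [set: 'rV[R]_n * 'rV[R]_q]].

End Defs.

(* Main.v *)
Require Import Defs.
From HB Require Import structures.
From mathcomp Require Import all_boot all_order all_algebra.
From mathcomp Require Import all_classical all_reals all_analysis.
From mathcomp Require Import ring lra.
Import Order.TTheory GRing.Theory Num.Theory.
Import numFieldNormedType.Exports.
Set Implicit Arguments. Unset Strict Implicit. Unset Printing Implicit Defensive.
Local Open Scope classical_set_scope.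
Local Open Scope ring_scope.


Definition sball (R : realType) (m : nat) (a : 'rV[R]_m) (d : R) : set 'rV[R]_m :=
  [set x | forall i, `|x 0 i - a 0 i| < d].

Lemma sball_sym (R : realType) m (a x : 'rV[R]_m) (d : R) : sball a d x -> sball x d a.
Proof. by move=> H i; rewrite distrC. Qed.

Lemma sball_c (R : realType) m (a : 'rV[R]_m) (d : R) : 0 < d -> sball a d a.
Proof. by move=> d0 i; rewrite subrr normr0. Qed.

Lemma ri_sball (R : realType) m (S : set 'rV[R]_m) a : ri S a ->
  S a /\ exists d, 0 < d /\ forall x, sball a d x -> aff S x -> S x.
Proof.
move=> [Sa [d [d0 H]]]; split => //.
exists (d / (m%:R + 1)); split; first by rewrite divr_gt0 // ltr_wpDl.
move=> x xb xa; apply: H; split => //; rewrite /eball /=.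
have k0 : 0 < m%:R + 1 :> R by rewrite ltr_wpDl.
apply: (@le_lt_trans _ _ (\sum_(i < m) (d / (m%:R + 1)) ^+ 2)).
  apply: ler_sum => i _; rewrite -real_normK ?num_real //.
  by rewrite lerXn2r ?nnegrE ?normr_ge0 ?divr_ge0 ?ltW // ltW.
rewrite sumr_const card_ord expr_div_n -[_ *+ m]mulr_natr.
have -> : d ^+ 2 / (m%:R + 1) ^+ 2 * m%:R = d ^+ 2 * (m%:R / (m%:R + 1) ^+ 2) :> R.
  by rewrite mulrAC -mulrA.
rewrite gtr_pMr ?exprn_gt0 // ltr_pdivrMr ?exprn_gt0 // mul1r.
have m0 : 0 <= m%:R :> R by [].
rewrite expr2; nra.
Qed.

Definition bnd (R : realType) m k (M : 'M[R]_(m, k)) : R := \sum_i \sum_j `|M i j|.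

Lemma bnd_ge0 (R : realType) m k (M : 'M[R]_(m, k)) : 0 <= bnd M.
Proof. by apply: sumr_ge0 => i _; apply: sumr_ge0 => j _. Qed.

Lemma mul_bound (R : realType) m k (v : 'rV[R]_m) (M : 'M[R]_(m, k)) e j :
  (forall i, `|v 0 i| <= e) -> `|(v *m M) 0 j| <= e * bnd M.
Proof.
move=> hv; rewrite mxE /bnd mulr_sumr.
apply: (le_trans (ler_norm_sum _ _ _)); apply: ler_sum => i _.
rewrite normrM; apply: (@le_trans _ _ (e * `|M i j|)).
  by rewrite ler_wpM2r.
apply: ler_wpM2l; first by apply: le_trans (hv i).
by rewrite (bigD1 j) //= lerDl sumr_ge0.
Qed.

Lemma cvx_comb (R : realType) m (C : set 'rV[R]_m) (p0 : 'rV[R]_m) k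
   (q : 'I_k -> 'rV[R]_m) (l : 'I_k -> R) :
  convex1 C -> C p0 -> (forall j, C (q j)) -> (forall j, 0 <= l j) ->
  \sum_j l j <= 1 -> C (p0 + \sum_j l j *: (q j - p0)).
Proof.
move=> cC Cp0; elim: k q l => [|k IH] q l Cq l0 ls.
  by rewrite big_ord0 addr0.
rewrite big_ord_recr /=; rewrite big_ord_recr /= in ls.
set L := l ord_max in ls *; set s := \sum_(i < k) l (widen_ord (leqnSn k) i) in ls *.
have L0 : 0 <= L by apply: l0.
have s0 : 0 <= s by apply: sumr_ge0 => i _; apply: l0.
have [L1|L1] := eqVneq L 1.
  have s00 : s = 0 by lra.
  have z : forall i : 'I_k, l (widen_ord (leqnSn k) i) = 0.
    by move=> i; apply: (psumr_eq0P (fun i _ => l0 (widen_ord (leqnSn k) i)) s00).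
  rewrite (eq_bigr (fun=> 0)); last by move=> i _; rewrite z scale0r.
  by rewrite big1_eq L1 scale1r add0r addrC subrK.
have L1' : L < 1 by rewrite lt_neqAle L1 /=; lra.
set y := p0 + \sum_(i < k) (l (widen_ord (leqnSn k) i) / (1 - L)) *:
                   (q (widen_ord (leqnSn k) i) - p0).
have Cy : C y.
  apply: IH => // [j|]; first by rewrite divr_ge0 // subr_ge0 ltW.
  rewrite -mulr_suml ler_pdivrMr ?subr_gt0 // mul1r -/s; lra.
have := cC y (q ord_max) (1 - L) Cy (Cq ord_max).
have -> : 1 - (1 - L) = L by ring.
have tt : 0 <= 1 - L <= 1 by apply/andP; split; lra.
move=> /(_ tt).
congr C; rewrite /y scalerDr scaler_sumr.
rewrite (eq_bigr (fun i => l (widen_ord (leqnSn k) i) *: (q (widen_ord (leqnSn k) i) - p0))); last first.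
  move=> i _; rewrite scalerA mulrC divfK //; rewrite subr_eq0 eq_sym; exact: L1.
rewrite scalerBl scale1r scalerBr.
set S := \sum_(i < k) _; set P := L *: p0; set Q := L *: q ord_max.
rewrite !addrA.
by rewrite (addrAC p0 (- P) S) (addrAC (p0 + S) (-P) Q).
Qed.


Definition Aff (R : realType) m (p0 : 'rV[R]_m) k (A : 'M[R]_(k, m)) : set 'rV[R]_m :=
  [set x | (x - p0 <= A)%MS].

Lemma aff_sub (R : realType) m (S : set 'rV[R]_m) p0 k (A : 'M[R]_(k, m)) :
  S `<=` Aff p0 A -> aff S `<=` Aff p0 A.
Proof.
move=> SA x [l [w [p [Sp [w1 ->]]]]]; rewrite /Aff /=.
have -> : \sum_(i < l) w i *: p i - p0 = \sum_(i < l) w i *: (p i - p0).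
  rewrite -{1}[p0]scale1r -w1 scaler_suml -sumrB.
  by apply: eq_bigr => i _; rewrite scalerBr.
by apply: summx_sub => i _; apply: scalemx_sub; apply: SA.
Qed.

Lemma aff_self (R : realType) m (S : set 'rV[R]_m) x : S x -> aff S x.
Proof.
move=> Sx; exists 1%N, (fun=> 1), (fun=> x); split => //; split.
  by rewrite big_ord1.
by rewrite big_ord1 scale1r.
Qed.

Lemma aff2 (R : realType) m (S : set 'rV[R]_m) a c e : S a -> S c ->
  aff S (a + e *: (a - c)).
Proof.
move=> Sa Sc.
exists 2%N, (fun i : 'I_2 => if i == ord0 then 1 + e else - e),
   (fun i : 'I_2 => if i == ord0 then a else c); split.
  by move=> i; case: ifP.
rewrite !big_ord_recr !big_ord0 /= !add0r; split; first by ring.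
by rewrite scalerBr scalerDl scale1r scaleNr addrA.
Qed.

Lemma Aff_sub_aff (R : realType) m (C : set 'rV[R]_m) p0 k (A : 'M[R]_(k, m)) :
  C p0 -> (forall j, C (p0 + row j A)) -> Aff p0 A `<=` aff C.
Proof.
move=> Cp0 CA x Ax.
set al := (x - p0) *m pinvmx A.
have ex : x - p0 = \sum_j al 0 j *: row j A by rewrite -mulmx_sum_row mulmxKpV.
exists k.+1, (fun i : 'I_k.+1 => match unlift ord0 i with
    Some j => al 0 j | None => 1 - \sum_j al 0 j end),
  (fun i : 'I_k.+1 => match unlift ord0 i with
    Some j => p0 + row j A | None => p0 end); split.
  by move=> i; case: (unlift ord0 i).
rewrite !big_ord_recl !unlift_none.
have L1 : forall (T : Type) (f : 'I_k -> T) (g : T) i,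
  match unlift ord0 (lift ord0 i) with Some j => f j | None => g end = f i.
  by move=> T f g i; rewrite liftK.
rewrite (eq_bigr (fun j => al 0 j) (fun j _ => L1 _ (fun j => al 0 j) (1 - \sum_j al 0 j) j)).
split; first by ring.
rewrite [X in x = _ + X](eq_bigr (fun j => al 0 j *: (p0 + row j A))); last first.
  by move=> j _; rewrite !L1.
have -> : \sum_(i < k) al 0 i *: (p0 + row i A) = (\sum_j al 0 j) *: p0 + (x - p0).
  by rewrite ex scaler_suml -big_split /=; apply: eq_bigr => j _; rewrite scalerDr.
by rewrite scalerBl scale1r addrA subrK addrC subrK.
Qed.

Lemma Aff_clos (R : realType) m p0 k (A : 'M[R]_(k, m)) b :
  (forall e, 0 < e -> exists y, Aff p0 A y /\ sball b e y) -> Aff p0 A b.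
Proof.
move=> H; rewrite /Aff /= submxE; apply/eqP/rowP => j; rewrite [RHS]mxE.
set u := ((b - p0) *m cokermx A) 0 j.
set B := bnd (cokermx A).
have B0 : 0 <= B := bnd_ge0 (cokermx A).
apply/eqP; rewrite -normr_le0 leNgt; apply/negP => u0.
have e'0 : 0 < `|u| / (B + 1) by rewrite divr_gt0 // ltr_wpDl.
have [y [Ay yb]] := H _ e'0.
have y0 : (y - p0) *m cokermx A = 0 by apply/eqP; rewrite -submxE.
have ueq : u = ((b - y) *m cokermx A) 0 j.
  rewrite /u -[b - p0](subrK (y - p0)) mulmxDl y0 addr0.
  by congr ((_ *m _) _ _); rewrite opprB addrA subrK.
have hb : `|u| <= `|u| / (B + 1) * B.
  rewrite {1}ueq; apply: mul_bound => i; rewrite !mxE; apply/ltW; rewrite distrC; exact: (yb i).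
rewrite mulrAC ler_pdivlMr ?ltr_wpDl // in hb.
nra.
Qed.

Lemma aff_rep (R : realType) m (C : set 'rV[R]_m) p0 : C p0 ->
  exists k (A : 'M[R]_(k, m)), (forall j, C (p0 + row j A)) /\ C `<=` Aff p0 A.
Proof.
move=> Cp0.
pose P := fun r : nat => `[< exists k (A : 'M[R]_(k, m)),
   (forall j, C (p0 + row j A)) /\ \rank A = r >].
have exP : exists r, P r.
  exists 0%N; apply/asboolP; exists 0%N, (0 : 'M[R]_(0, m)); split.
    by case.
  by rewrite mxrank0.
have ubP : forall r, P r -> (r <= m)%N.
  by move=> r /asboolP [k [A [_ <-]]]; apply: rank_leq_col.
case: (ex_maxnP exP ubP) => r /asboolP [k [A [CA rA]]] rmax.
exists k, A; split => // x Cx; rewrite /Aff /=.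
apply/negPn/negP => nx.
set A' := col_mx A (x - p0).
have : P (\rank A') .
  apply/asboolP; exists (k + 1)%N, A'; split => // j.
  case: (splitP j) => j' ej.
    have -> : j = lshift 1 j' by apply: val_inj.
    by rewrite rowKu.
  have -> : j = rshift k j' by apply: val_inj.
  by rewrite rowKd row_id addrC subrK.
move/rmax; rewrite -rA; apply/negP; rewrite -ltnNge.
have : (A < A')%MS.
  rewrite ltmxE /A' col_mx_sub submx_refl /=; apply/andP; split.
    by rewrite -addsmxE addsmxSl.
  exact: nx.
by rewrite ltmxErank => /andP [].
Qed.

Lemma aff_eq (R : realType) m (C : set 'rV[R]_m) p0 k (A : 'M[R]_(k, m)) :
  C p0 -> (forall j, C (p0 + row j A)) -> C `<=` Aff p0 A -> aff C = Aff p0 A.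
Proof.
move=> Cp0 CA CAf; apply/seteqP; split; first exact: aff_sub.
exact: Aff_sub_aff.
Qed.


Definition ri2 (R : realType) m (C : set 'rV[R]_m) a :=
  C a /\ exists d, 0 < d /\ forall x, sball a d x -> aff C x -> C x.

Definition clos (R : realType) m (C : set 'rV[R]_m) b :=
  forall e, 0 < e -> exists y, C y /\ sball b e y.

Lemma small_pert (R : realType) m (a c : 'rV[R]_m) (d : R) : 0 < d ->
  exists2 e, 0 < e & forall s, 0 <= s <= e -> sball a d (a + s *: (a - c)).
Proof.
move=> d0; set M := \sum_i `|a 0 i - c 0 i|.
have M0 : 0 <= M by apply: sumr_ge0.
exists (d / (M + 1)); first by rewrite divr_gt0 // ltr_wpDl.
move=> s /andP [s0 se] i.
have -> : (a + s *: (a - c)) 0 i - a 0 i = s * (a 0 i - c 0 i) by rewrite !mxE; ring.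
rewrite normrM ger0_norm //.
have hi : `|a 0 i - c 0 i| <= M.
  by rewrite /M (bigD1 i) //= lerDl sumr_ge0.
apply: (le_lt_trans (ler_wpM2l s0 hi)).
apply: (le_lt_trans (ler_wpM2r M0 se)).
rewrite mulrAC ltr_pdivrMr ?ltr_wpDl //; nra.
Qed.

Lemma NE (R : realType) m (C : set 'rV[R]_m) p0 : convex1 C -> C p0 ->
  exists c, ri2 C c.
Proof.
move=> cC Cp0; have [k [A [CA CAf]]] := aff_rep Cp0.
have affE := aff_eq Cp0 CA CAf.
set K : R := k%:R + 1.
have K0 : 0 < K by rewrite ltr_wpDl.
set q := fun j => p0 + row j A.
have qE : forall j, q j - p0 = row j A by move=> j; rewrite /q addrC addKr.
set c := p0 + \sum_(j < k) K^-1 *: (q j - p0).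
have sumK : \sum_(j < k) K^-1 = k%:R / K by rewrite sumr_const card_ord mulr_natl.
have kK : k%:R / K <= 1 by rewrite ler_pdivrMr // mul1r /K lerDl.
set B := bnd (pinvmx A).
have B0 : 0 <= B := bnd_ge0 _.
set d := (K ^+ 2 * (B + 1))^-1.
have d0 : 0 < d by rewrite invr_gt0 mulr_gt0 ?exprn_gt0 ?ltr_wpDl.
exists c; split.
  apply: cvx_comb => // [j|]; first by rewrite invr_ge0 ltW.
  by rewrite sumK.
exists d; split => // x xb; rewrite affE /Aff /= => xA.
have cA : (c - p0 <= A)%MS.
  by rewrite /c addrC addKr; apply: summx_sub => j _; apply: scalemx_sub; rewrite qE row_sub.
have xcA : (x - c <= A)%MS.
  have -> : x - c = (x - p0) + - (c - p0) by rewrite opprB addrA subrK.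
  by rewrite addmx_sub // eqmx_opp.
set al := (x - c) *m pinvmx A.
have xe : x - c = \sum_j al 0 j *: row j A by rewrite -mulmx_sum_row mulmxKpV.
set iK := K^-1.
have iKK : iK * K = 1 by rewrite mulVf // gt_eqF.
have iK0 : 0 <= iK by rewrite invr_ge0 ltW.
have K1 : 1 <= K by rewrite /K lerDr.
have alb : forall j, `|al 0 j| <= iK ^+ 2.
  move=> j; apply: le_trans (@mul_bound R m k (x - c) (pinvmx A) d j _) _.
    by move=> i; apply/ltW; move: (xb i); rewrite !mxE.
  have -> : d * B = iK ^+ 2 * (B / (B + 1)).
    by rewrite /d /iK; field; rewrite !gt_eqF // ltr_wpDl.
  apply: ler_piMr; first by rewrite exprn_ge0.
  by rewrite ler_pdivrMr ?ltr_wpDl // mul1r lerDl.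
have -> : x = p0 + \sum_j (iK + al 0 j) *: (q j - p0).
  rewrite -[x](subrK c) xe /c.
  under [X in _ = _ + X]eq_bigr => j _ do rewrite scalerDl qE.
  rewrite big_split /=.
  under [X in _ = _ + (X + _)]eq_bigr => j _ do rewrite -qE.
  by rewrite addrC addrA.
apply: cvx_comb => // [j|].
  have := alb j; rewrite ler_norml => /andP [h1 h2].
  have : iK ^+ 2 <= iK by rewrite expr2; nra.
  lra.
rewrite big_split /= sumr_const card_ord.
have : \sum_(j < k) al 0 j <= k%:R * iK ^+ 2.
  have h : forall j : 'I_k, true -> al 0 j <= iK ^+ 2.
    by move=> j _; apply: le_trans (ler_norm _) (alb j).
  apply: le_trans (ler_sum _ h) _.
  by rewrite sumr_const card_ord mulr_natl.
have -> : k%:R = K - 1 by rewrite /K addrK.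
rewrite -mulr_natr (_ : k%:R = K - 1); last by rewrite /K addrK.
move=> h.
have : iK ^+ 2 <= iK by rewrite expr2; nra.
rewrite expr2 in h *; nra.
Qed.

Lemma lsp_real (R : realType) (y b' bb cv t d : R) : 0 <= t < 1 -> 0 < d ->
  `|y - ((1 - t) * cv + t * bb)| < (1 - t) * d / 2 ->
  `|b' - bb| < (1 - t) * d / 2 ->
  `|(1 - t)^-1 * (y - t * b') - cv| < d.
Proof.
move=> /andP [t0 t1] d0 h1 h2.
have t10 : 0 < 1 - t by rewrite subr_gt0.
set z := (1 - t)^-1 * (y - t * b') - cv.
have E : z * (1 - t) = (y - ((1 - t) * cv + t * bb)) - t * (b' - bb).
  by rewrite /z; field; rewrite gt_eqF.
have h3 : `|z| * (1 - t) < d * (1 - t).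
  have -> : `|z| * (1 - t) = `|z * (1 - t)| by rewrite normrM (ger0_norm (ltW t10)).
  rewrite E.
  apply: (le_lt_trans (ler_normB _ _)).
  rewrite normrM ger0_norm //.
  have : t * `|b' - bb| <= t * ((1 - t) * d / 2) by apply: ler_wpM2l => //; apply: ltW.
  have : t * ((1 - t) * d / 2) <= (1 - t) * d / 2.
    by apply: ler_piMl; [rewrite divr_ge0 // mulr_ge0 // ltW | apply: ltW].
  lra.
by rewrite ltr_pM2r in h3.
Qed.

Lemma LSP (R : realType) m (C : set 'rV[R]_m) c b t : convex1 C -> ri2 C c ->
  clos C b -> 0 <= t < 1 -> ri2 C ((1 - t) *: c + t *: b).
Proof.
move=> cC [Cc [d [d0 Hd]]] cb /andP [t0 t1].
have t10 : 0 < 1 - t by rewrite subr_gt0.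
have [k [A [CA CAf]]] := aff_rep Cc.
have affE := aff_eq Cc CA CAf.
have bA : Aff c A b.
  apply: Aff_clos => e e0; have [y [Cy yb]] := cb e e0.
  by exists y; split => //; apply: CAf.
set x := (1 - t) *: c + t *: b.
set d' := (1 - t) * d / 2.
have d'0 : 0 < d' by rewrite /d' divr_gt0 // mulr_gt0.
have key : forall y, sball x d' y -> aff C y -> C y.
  move=> y yb; rewrite affE => yA.
  have [b' [Cb' bb']] := cb d' d'0.
  set c' := (1 - t)^-1 *: (y - t *: b').
  have c'A : Aff c A c'.
    rewrite /Aff /=.
    have -> : c' - c = (1 - t)^-1 *: ((y - c) + - (t *: (b' - c))).
      by apply/rowP => i; rewrite !mxE; field; rewrite gt_eqF.
    apply: scalemx_sub; apply: addmx_sub => //.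
    by rewrite eqmx_opp; apply: scalemx_sub; apply: CAf.
  have c'b : sball c d c'.
    move=> i.
    have -> : c' 0 i = (1 - t)^-1 * (y 0 i - t * b' 0 i) by rewrite !mxE.
    apply: lsp_real => //; first by apply/andP.
      by have := yb i; rewrite !mxE.
  have Cc' : C c' by apply: Hd => //; rewrite affE.
  have tt : 0 <= 1 - t <= 1 by apply/andP; split; lra.
  have := cC c' b' (1 - t) Cc' Cb' tt.
  congr C; apply/rowP => i; rewrite !mxE; field; rewrite gt_eqF //.
split; last by exists d'.
apply: key; first exact: sball_c.
rewrite affE /Aff /=.
have -> : x - c = t *: (b - c) by apply/rowP => i; rewrite !mxE; ring.
exact: scalemx_sub.
Qed.

Lemma FD (R : realType) m (C Om : set 'rV[R]_m) a : convex1 C ->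
  C `<=` Om -> Om `<=` clos C -> ri Om a -> ri2 C a.
Proof.
move=> cC COm Omc /ri_sball [Oma [d [d0 Hd]]].
have [p Cp] : exists p, C p.
  have [y [Cy _]] := Omc a Oma 1 ltr01; by exists y.
have [c ric] := NE cC Cp.
have [e e0 He] := small_pert a c d0.
set a' := a + e *: (a - c).
have Oa' : Om a'.
  apply: Hd; first by apply: He; rewrite lexx andbT ltW.
  apply: aff2 => //; apply: COm; exact: ric.1.
have e10 : 0 < 1 + e by rewrite ltr_wpDl // ltW.
set t := (1 + e)^-1.
have tr : 0 <= t < 1.
  rewrite invr_ge0 ltW //= invf_lt1 //; lra.
have := LSP cC ric (Omc a' Oa') tr.
congr ri2; apply/rowP => i; rewrite !mxE /t; field; exact: lt0r_neq0.
Qed.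

Lemma EP (R : realType) m (C : set 'rV[R]_m) a y : ri2 C a -> C y ->
  exists2 e, 0 < e & C (a + e *: (a - y)).
Proof.
move=> [Ca [d [d0 Hd]]] Cy.
have [e e0 He] := small_pert a y d0.
exists e => //; apply: Hd; first by apply: He; rewrite lexx andbT ltW.
exact: aff2.
Qed.


Lemma dotpDr (R : realType) m (c x y : 'rV[R]_m) : dotp c (x + y) = dotp c x + dotp c y.
Proof. by rewrite /dotp -big_split; apply: eq_bigr => i _; rewrite mxE mulrDr. Qed.

Lemma dotpZr (R : realType) m (c x : 'rV[R]_m) a : dotp c (a *: x) = a * dotp c x.
Proof. by rewrite /dotp mulr_sumr; apply: eq_bigr => i _; rewrite mxE mulrCA. Qed.

Lemma dotpNr (R : realType) m (c x : 'rV[R]_m) : dotp c (- x) = - dotp c x.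
Proof. by rewrite -scaleN1r dotpZr mulN1r. Qed.

Lemma dotpBr (R : realType) m (c x y : 'rV[R]_m) : dotp c (x - y) = dotp c x - dotp c y.
Proof. by rewrite dotpDr dotpNr. Qed.

Lemma dotp0l (R : realType) m (x : 'rV[R]_m) : dotp 0 x = 0.
Proof. by rewrite /dotp big1 // => i _; rewrite mxE mul0r. Qed.

Lemma dotp_delta (R : realType) m (c x : 'rV[R]_m) a (j : 'I_m) :
  dotp (c + a *: delta_mx 0 j) x = dotp c x + a * x 0 j.
Proof.
rewrite /dotp (bigD1 j) //= [in RHS](bigD1 j) //= !mxE eqxx /=.
rewrite (eq_bigr (fun i => c 0 i * x 0 i)); last first.
  by move=> i /negbTE ij; rewrite !mxE ij andbF mulr0 addr0.
by rewrite eqxx mulr1; ring.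
Qed.

Lemma sup_between (R : realType) (A B : set R) :
  A !=set0 -> B !=set0 -> (forall a b, A a -> B b -> a <= b) ->
  exists c, (forall a, A a -> a <= c) /\ (forall b, B b -> c <= b).
Proof.
move=> [a0 Aa0] [b0 Bb0] H.
have ubA : has_sup A by split; [exists a0 | exists b0 => a Aa; apply: H].
exists (sup A); split.
  by move=> a Aa; apply: sup_upper_bound.
move=> b Bb; apply: ge_sup; first by exists a0.
by move=> a Aa; apply: H.
Qed.

Definition Zk (R : realType) N (k : nat) (x : 'rV[R]_N) :=
  forall j : 'I_N, (k <= j)%N -> x 0 j = 0.

Lemma HBk (R : realType) N (K : set ('rV[R]_N * R)) (v : R) :
  (forall d1 r1 d2 r2 t, K (d1, r1) -> K (d2, r2) -> 0 <= t <= 1 ->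
      K (t *: d1 + (1 - t) *: d2, t * r1 + (1 - t) * r2)) ->
  (forall r, K (0, r) -> v <= r) ->
  (forall d r, K (d, r) -> exists e, 0 < e /\ exists r', K (- (e *: d), r')) ->
  forall k, exists c : 'rV[R]_N, forall d r, K (d, r) -> Zk k d -> dotp c d <= r - v.
Proof.
move=> cK K0 EP; elim => [|k [c IH]].
  exists 0 => d r Kdr Zd; rewrite dotp0l subr_ge0.
  have d0 : d = 0 by apply/rowP => j; rewrite mxE; apply: Zd.
  by rewrite d0 in Kdr; apply: K0.
have [kN|kN] := ltnP k N; last first.
  exists c => d r Kdr Zd; apply: IH => // j kj.
  by have := ltn_ord j; rewrite ltnNge (leq_trans kN kj).
set jk := Ordinal kN.
have ZkS : forall d : 'rV[R]_N, Zk k.+1 d -> d 0 jk = 0 -> Zk k d.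
  move=> d Zd dk j kj; have [kj'|kj'] := ltnP k j; first exact: Zd.
  have ejk : j = jk by apply: val_inj => /=; apply/eqP; rewrite eqn_leq kj kj'.
  by rewrite ejk.
have [[f [rf [Kf [Zf f0]]]]|nf] :=
  pselect (exists f rf, K (f, rf) /\ Zk k.+1 f /\ f 0 jk != 0); last first.
  exists c => d r Kdr Zd; apply: IH => //; apply: ZkS => //.
  apply/eqP/negP => dk; apply: nf; exists d, r; split => //; split => //.
  exact/negP.
pose A := [set a | exists m sg r, [/\ Zk k m, 0 < sg, K (m - sg *: f, r) &
            a = (dotp c m - (r - v)) / sg]].
pose B := [set b | exists m s r, [/\ Zk k m, 0 < s, K (m + s *: f, r) &
            b = (r - v - dotp c m) / s]].
have An : A !=set0.
  have [e [e0 [r' Kr']]] := EP _ _ Kf.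
  exists ((dotp c 0 - (r' - v)) / e), 0, e, r'; split => //.
    by move=> j _; rewrite mxE.
  by rewrite sub0r.
have Bn : B !=set0.
  exists ((rf - v - dotp c 0) / 1), 0, 1, rf; split => //.
    by move=> j _; rewrite mxE.
  by rewrite add0r scale1r.
have AB : forall a b, A a -> B b -> a <= b.
  move=> _ _ [m [sg [r [Zm sg0 Km ->]]]] [m' [s [r' [Zm' s0 Km' ->]]]].
  have ss0 : 0 < s + sg by rewrite addr_gt0.
  set t := s / (s + sg).
  have tt : 0 <= t <= 1.
    by rewrite /t divr_ge0 ?ltW //= ltr_pdivrMr // mul1r ltrDl.
  have := cK _ _ _ _ t Km Km' tt.
  have -> : t *: (m - sg *: f) + (1 - t) *: (m' + s *: f) =
            (s + sg)^-1 *: (s *: m + sg *: m').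
    by apply/rowP => i; rewrite !mxE /t; field; rewrite gt_eqF.
  move=> /IH H.
  have H' : dotp c ((s + sg)^-1 *: (s *: m + sg *: m')) <= t * r + (1 - t) * r' - v.
    by apply: H => j kj; rewrite !mxE (Zm j kj) (Zm' j kj) !mulr0 addr0 mulr0.
  rewrite dotpZr dotpDr !dotpZr in H'.
  have H2 : s * dotp c m + sg * dotp c m' <= s * r + sg * r' - (s + sg) * v.
    move: H'; rewrite -(ler_pM2l ss0) mulrA mulfV ?gt_eqF // mul1r.
    have -> : (s + sg) * (t * r + (1 - t) * r' - v) = s * r + sg * r' - (s + sg) * v.
      by rewrite /t; field; rewrite gt_eqF.
    by [].
  rewrite ler_pdivrMr // mulrAC ler_pdivlMr //.
  nra.
have [cc [ccA ccB]] := sup_between An Bn AB.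
set al := (cc - dotp c f) / f 0 jk.
exists (c + al *: delta_mx 0 jk) => d r Kdr Zd.
rewrite dotp_delta.
set s := d 0 jk / f 0 jk.
set m0 := d - s *: f.
have Zm0 : Zk k m0.
  move=> j kj; rewrite !mxE; have [kj'|kj'] := ltnP k j.
    by rewrite (Zd j kj') (Zf j kj') mulr0 subr0.
  have ejk : j = jk by apply: val_inj => /=; apply/eqP; rewrite eqn_leq kj kj'.
  by rewrite ejk /s divfK // subrr.
have dE : d = m0 + s *: f by rewrite /m0 subrK.
have E : dotp c d + al * d 0 jk = dotp c m0 + s * cc.
  by rewrite {1}dE dotpDr dotpZr /al /s; field.
rewrite E.
have [s0|s0|s0] := ltrgtP s 0.
- have hA : A ((dotp c m0 - (r - v)) / (- s)).
    exists m0, (- s), r; split => //; first by rewrite oppr_gt0.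
    by rewrite scaleNr opprK -dE.
  have := ccA _ hA; rewrite ler_pdivrMr ?oppr_gt0 // => h.
  nra.
- have hB : B ((r - v - dotp c m0) / s).
    by exists m0, s, r; split => //; rewrite -dE.
  have := ccB _ hB; rewrite ler_pdivlMr // => h.
  nra.
- rewrite s0 mul0r addr0; apply: IH => //.
  by move: Zm0; rewrite /m0 s0 scale0r subr0.
Qed.

Lemma HB (R : realType) N (K : set ('rV[R]_N * R)) (v : R) :
  (forall d1 r1 d2 r2 t, K (d1, r1) -> K (d2, r2) -> 0 <= t <= 1 ->
      K (t *: d1 + (1 - t) *: d2, t * r1 + (1 - t) * r2)) ->
  (forall r, K (0, r) -> v <= r) ->
  (forall d r, K (d, r) -> exists e, 0 < e /\ exists r', K (- (e *: d), r')) ->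
  exists c : 'rV[R]_N, forall d r, K (d, r) -> dotp c d <= r - v.
Proof.
move=> cK K0 EP; have [c H] := HBk cK K0 EP N.
exists c => d r Kdr; apply: H => // j Nj.
by have := ltn_ord j; rewrite ltnNge Nj.
Qed.


Lemma closure_clos (R : realType) m (A : set 'rV[R]_m) x : closure A x -> clos A x.
Proof.
move=> cx e e0; have [y [Ay bxy]] := cx _ (nbhsx_ballx x e e0).
exists y; split => // i; case: bxy => _ /(_ 0 i); by by rewrite /ball /= distrC.
Qed.

Lemma closure_pair (R : realType) n q (A : set ('rV[R]_n * 'rV[R]_q)) z w :
  closure A (z, w) -> forall e, 0 < e -> exists z' w', A (z', w') /\ sball z e z' /\ sball w e w'.
Proof.
move=> cx e e0; have [[z' w'] [Ay [b1 b2]]] := cx _ (nbhsx_ballx (z, w) e e0).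
exists z', w'; split => //; split => i.
  by case: b1 => _ /(_ 0 i); by rewrite /ball /= distrC.
by case: b2 => _ /(_ 0 i); by rewrite /ball /= distrC.
Qed.

Lemma closure_epi (R : realType) n (A : set ('rV[R]_n * R^o)) z (r : R) :
  closure A (z, r) -> forall e, 0 < e -> exists z' r', A (z', r') /\ sball z e z' /\ `|r - r'| < e.
Proof.
move=> cx e e0; have [[z' r'] [Ay [b1 b2]]] := cx _ (nbhsx_ballx (z, r : R^o) e e0).
exists z', r'; split => //; split => [i|].
  by case: b1 => _ /(_ 0 i); by rewrite /ball /= distrC.
by move: b2; rewrite /ball /=.
Qed.

Definition emb (R : realType) n q (C : set ('rV[R]_n * 'rV[R]_q)) : set 'rV[R]_(n + q) :=
  [set y | exists z w, C (z, w) /\ y = row_mx z w].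

Lemma closure_emb (R : realType) n q (C : set ('rV[R]_n * 'rV[R]_q)) z w :
  closure C (z, w) -> clos (emb C) (row_mx z w).
Proof.
move=> cx e e0; have [z' [w' [Cz [b1 b2]]]] := closure_pair cx e0.
exists (row_mx z' w'); split; first by exists z', w'.
move=> i; case: (splitP i) => j ej.
  have -> : i = lshift q j by apply: val_inj.
  by rewrite !row_mxEl; apply: b1.
have -> : i = rshift n j by apply: val_inj.
by rewrite !row_mxEr; apply: b2.
Qed.

Lemma cvx_emb (R : realType) n q (C : set ('rV[R]_n * 'rV[R]_q)) :
  convex2 C -> convex1 (emb C).
Proof.
move=> cC _ _ t [z1 [w1 [C1 ->]]] [z2 [w2 [C2 ->]]] tt.
exists (t *: z1 + (1 - t) *: z2), (t *: w1 + (1 - t) *: w2); split.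
  exact: (cC (z1, w1) (z2, w2) t C1 C2 tt).
by rewrite !scale_row_mx add_row_mx.
Qed.

Lemma cvx_proj (R : realType) n (W : normedModType R) (C : set ('rV[R]_n * W)) :
  convex2 C -> convex1 [set x | exists y, C (x, y)].
Proof.
move=> cC x1 x2 t [y1 C1] [y2 C2] tt.
by exists (t *: y1 + (1 - t) *: y2); exact: (cC (x1, y1) (x2, y2) t C1 C2 tt).
Qed.

Lemma clos_self (R : realType) m (C : set 'rV[R]_m) x : C x -> clos C x.
Proof. by move=> Cx e e0; exists x; split => //; apply: sball_c. Qed.

Lemma EP' (R : realType) m (C : set 'rV[R]_m) a y : convex1 C -> ri2 C a -> C y ->
  exists2 e, 0 < e & forall e', 0 <= e' <= e -> C (a + e' *: (a - y)).
Proof.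
move=> cC ra Cy; have [e e0 Ce] := EP ra Cy.
exists e => // e' /andP [e'0 e'e].
have tt : 0 <= e' / e <= 1.
  apply/andP; split; first by rewrite divr_ge0 // ltW.
  by rewrite ler_pdivrMr // mul1r.
have := cC _ _ (e' / e) Ce ra.1 tt.
congr C; apply/rowP => i; rewrite !mxE; field; exact: lt0r_neq0.
Qed.

Lemma lim_t (R : realType) (v al be : R) :
  (forall t, 0 <= t < 1 -> v <= al + t * be) -> v <= al + be.
Proof.
move=> H; rewrite leNgt; apply/negP => h.
set g := v - (al + be).
have g0 : 0 < g by rewrite subr_gt0.
set t := 1 - g / (`|be| + g).
have bg : 0 < `|be| + g by rewrite ltr_wpDl.
have t1 : 0 <= t < 1.
  have q0 : 0 < g / (`|be| + g) by rewrite divr_gt0.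
  have q1 : g / (`|be| + g) <= 1 by rewrite ler_pdivrMr // mul1r lerDr.
  by apply/andP; split; rewrite /t; lra.
have := H t t1; rewrite /t mulrBl mul1r.
have : g / (`|be| + g) * (- be) <= g / (`|be| + g) * `|be|.
  by apply: ler_wpM2l; [rewrite divr_ge0 // ltW | rewrite -normrN; exact: ler_norm].
have : g / (`|be| + g) * `|be| < g.
  by rewrite mulrAC ltr_pdivrMr // ltr_pM2l // ltrDl.
rewrite /g; lra.
Qed.

Lemma lim_e (R : realType) (v X M : R) : 0 <= M ->
  (forall e, 0 < e -> v <= X + e * M) -> v <= X.
Proof.
move=> M0 H; rewrite leNgt; apply/negP => h.
set g := v - X.
have g0 : 0 < g by rewrite subr_gt0.
have e0 : 0 < g / (2 * (M + 1)) by rewrite divr_gt0 // mulr_gt0 // ltr_wpDl.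
have := H _ e0.
have : g / (2 * (M + 1)) * M < g.
  rewrite mulrAC ltr_pdivrMr ?mulr_gt0 ?ltr_wpDl //.
  have : 0 <= g * M by rewrite mulr_ge0 // ltW.
  nra.
rewrite /g; lra.
Qed.


Lemma emb_inv (R : realType) n q (C : set ('rV[R]_n * 'rV[R]_q)) z w :
  emb C (row_mx z w) -> C (z, w).
Proof. by move=> [z' [w' [C' /eq_row_mx [-> ->]]]]. Qed.

Lemma stage1 (R : realType) n q (phi : 'rV[R]_n -> \bar R)
  (Theta : set 'rV[R]_n) (G : 'rV[R]_n -> set 'rV[R]_q)
  (C1 : set ('rV[R]_n * R^o)) (C2 : set 'rV[R]_n) (C3 : set ('rV[R]_n * 'rV[R]_q)) :
  (forall x, (-oo < phi x)%E) ->
  convex2 C1 -> C1 `<=` epigraph phi -> epigraph phi `<=` closure C1 ->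
  convex1 C2 -> C2 `<=` Theta -> Theta `<=` closure C2 ->
  convex2 C3 -> C3 `<=` gph G -> gph G `<=` closure C3 ->
  ri (edom phi) `&` ri (mdom G) `&` ri Theta !=set0 ->
  ri (mimage G (Theta `&` edom phi)) 0 ->
  exists x0, [/\ ri2 [set x | exists r, C1 (x, r)] x0, ri2 C2 x0 &
                 ri2 (emb C3) (row_mx x0 0)].
Proof.
move=> phip cC1 C1e eC1 cC2 C2T TC2 cC3 C3g gC3 [a [[ra1 ra2] ra3]] rB.
set P1 := [set x | exists r, C1 (x, r)].
set P3 := [set z | exists w, C3 (z, w)].
have cP1 : convex1 P1 by apply: cvx_proj.
have cP3 : convex1 P3 by apply: cvx_proj.
have cC3e : convex1 (emb C3) by apply: cvx_emb.
have P1e : P1 `<=` edom phi.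
  move=> x [r /C1e]; rewrite /epigraph /edom /= => h.
  by apply: le_lt_trans h _; apply: ltry.
have eP1 : edom phi `<=` clos P1.
  move=> x; rewrite /edom /= => hx.
  have fx : phi x = (fine (phi x))%:E.
    by rewrite fineK // fin_numE (gt_eqF (phip x)) (lt_eqF hx).
  have : closure C1 (x, fine (phi x)) by apply: eC1; rewrite /epigraph /= -fx.
  move=> /closure_epi cl e e0; have [x' [r' [C1x [bx _]]]] := cl e e0.
  by exists x'; split => //; exists r'.
have P3d : P3 `<=` mdom G by move=> z [w /C3g h]; exists w.
have dP3 : mdom G `<=` clos P3.
  move=> z [w Gzw] e e0; have [z' [w' [C3z [bz _]]]] := closure_pair (gC3 (z, w) Gzw) e0.
  by exists z'; split => //; exists w'.
have TcC2 : Theta `<=` clos C2 by move=> z /TC2; apply: closure_clos.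
have riP1 := FD cP1 P1e eP1 ra1.
have riP3 := FD cP3 P3d dP3 ra2.
have riC2 := FD cC2 C2T TcC2 ra3.
have [b rab] : exists b, ri2 (emb C3) (row_mx a b).
  have [w0 C3a] := riP3.1.
  have hw : emb C3 (row_mx a w0) by exists a, w0.
  have [cpt rc] := NE cC3e hw.
  have [c1 [e1 [C3c ce]]] := rc.1.
  have hc1 : P3 c1 by exists e1.
  have [e e0 He] := EP riP3 hc1.
  have [b' C3a'] := He.
  have e10 : 0 < 1 + e by rewrite ltr_wpDl // ltW.
  set t := (1 + e)^-1.
  have tr : 0 <= t < 1 by rewrite invr_ge0 ltW //= invf_lt1 //; lra.
  have hb' : emb C3 (row_mx (a + e *: (a - c1)) b') by exists (a + e *: (a - c1)), b'.
  have := LSP cC3e rc (clos_self hb') tr.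
  rewrite ce !scale_row_mx add_row_mx => h.
  exists ((1 - t) *: e1 + t *: b').
  have <- : (1 - t) *: c1 + t *: (a + e *: (a - c1)) = a.
    by apply/rowP => i; rewrite !mxE /t; field; exact: lt0r_neq0.
  exact: h.
have [Om0 [d [d0 Hd]]] := ri_sball rB.
have Omb : mimage G (Theta `&` edom phi) b.
  exists a; first by split; [apply: C2T; exact: riC2.1 | exact: ra1.1].
  exact: (C3g (a, b) (emb_inv rab.1)).
have [e e0 He] := small_pert 0 b d0.
have : mimage G (Theta `&` edom phi) (0 + e *: (0 - b)).
  by apply: Hd; [apply: He; rewrite lexx andbT ltW | apply: aff2].
rewrite add0r sub0r => -[z1 [Tz1 ez1] Gz1].
have e10 : 0 < 1 + e by rewrite ltr_wpDl // ltW.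
set t := (1 + e)^-1.
have tr : 0 <= t < 1 by rewrite invr_ge0 ltW //= invf_lt1 //; lra.
exists ((1 - t) *: a + t *: z1); split.
- by apply: LSP => //; apply: eP1.
- by apply: LSP => //; apply: TcC2.
- have := LSP cC3e rab (closure_emb (gC3 (z1, e *: - b) Gz1)) tr.
  rewrite !scale_row_mx add_row_mx.
  have -> : (1 - t) *: b + t *: (e *: - b) = 0.
    by apply/rowP => i; rewrite !mxE /t; field; exact: lt0r_neq0.
  by [].
Qed.


Lemma dotp_row (R : realType) n q (c : 'rV[R]_(n + q)) (A : 'rV[R]_n) (B : 'rV[R]_q) :
  dotp c (row_mx A B) = dotp (lsubmx c) A + dotp (rsubmx c) B.
Proof.
rewrite /dotp big_split_ord /=; congr (_ + _); apply: eq_bigr => i _.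
  by rewrite row_mxEl mxE.
by rewrite row_mxEr mxE.
Qed.

Lemma dotpNl (R : realType) m (c x : 'rV[R]_m) : dotp (- c) x = - dotp c x.
Proof. by rewrite /dotp -sumrN; apply: eq_bigr => i _; rewrite mxE mulNr. Qed.

Lemma stage2 (R : realType) n q (phi : 'rV[R]_n -> \bar R)
  (Theta : set 'rV[R]_n) (G : 'rV[R]_n -> set 'rV[R]_q)
  (C1 : set ('rV[R]_n * R^o)) (C2 : set 'rV[R]_n) (C3 : set ('rV[R]_n * 'rV[R]_q))
  (v : R) (x0 : 'rV[R]_n) :
  convex2 C1 -> C1 `<=` epigraph phi ->
  convex1 C2 -> C2 `<=` Theta ->
  convex2 C3 -> C3 `<=` gph G ->
  (forall x, Theta x -> G x 0 -> (v%:E <= phi x)%E) ->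
  ri2 [set x | exists r, C1 (x, r)] x0 -> ri2 C2 x0 -> ri2 (emb C3) (row_mx x0 0) ->
  exists u ys, forall x r z w, C1 (x, r) -> C2 z -> C3 (z, w) ->
    v <= r - dotp u x + dotp u z - dotp ys w.
Proof.
move=> cC1 C1e cC2 C2T cC3 C3g Hv r1 r2 r3.
have cP1 : convex1 [set x | exists r, C1 (x, r)] by apply: cvx_proj.
have cC3e : convex1 (emb C3) by apply: cvx_emb.
pose K := [set p : 'rV[R]_(n + q) * R | exists x (r : R) z w,
   [/\ C1 (x, r), C2 z, C3 (z, w) & p = (row_mx (z - x) w, r)]].
have cK : forall d1 r1 d2 r2 t, K (d1, r1) -> K (d2, r2) -> 0 <= t <= 1 ->
      K (t *: d1 + (1 - t) *: d2, t * r1 + (1 - t) * r2).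
  move=> d1 s1 d2 s2 t [x1 [s1' [z1 [w1 [C11 C21 C31 [-> ->]]]]]]
    [x2 [s2' [z2 [w2 [C12 C22 C32 [-> ->]]]]]] tt.
  exists (t *: x1 + (1 - t) *: x2), (t * s1' + (1 - t) * s2'),
    (t *: z1 + (1 - t) *: z2), (t *: w1 + (1 - t) *: w2); split.
  - exact: (cC1 (x1, s1') (x2, s2') t C11 C12 tt).
  - exact: cC2.
  - exact: (cC3 (z1, w1) (z2, w2) t C31 C32 tt).
  - congr pair; rewrite !scale_row_mx add_row_mx; congr row_mx.
    by apply/rowP => i; rewrite !mxE; ring.
have K0 : forall r, K (0, r) -> v <= r.
  move=> r [x [r' [z [w [C1x C2z C3zw [e0 ->]]]]]].
  move: e0; rewrite -row_mx0 => /esym /eq_row_mx [/eqP].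
  rewrite subr_eq0 => /eqP ezx ew.
  rewrite ezx ew in C2z C3zw.
  have := Hv x (C2T _ C2z) (C3g _ C3zw).
  have := C1e _ C1x; rewrite /epigraph /= => h1 h2.
  by rewrite -lee_fin; apply: le_trans h2 h1.
have EPK : forall d r, K (d, r) -> exists e, 0 < e /\ exists r', K (- (e *: d), r').
  move=> d r [x [r' [z [w [C1x C2z C3zw [-> _]]]]]].
  have hx : exists r, C1 (x, r) by exists r'.
  have [e1 e10 H1] := EP' cP1 r1 hx.
  have [e2 e20 H2] := EP' cC2 r2 C2z.
  have hz : emb C3 (row_mx z w) by exists z, w.
  have [e3 e30 H3] := EP' cC3e r3 hz.
  set e := Num.min e1 (Num.min e2 e3).
  have e0 : 0 < e by rewrite /e !lt_min e10 e20 e30.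
  have ee1 : 0 <= e <= e1 by rewrite ltW //= /e ge_min lexx.
  have ee2 : 0 <= e <= e2 by rewrite ltW //= /e !ge_min lexx orbT.
  have ee3 : 0 <= e <= e3 by rewrite ltW //= /e !ge_min lexx !orbT.
  have [r'' C1'] := H1 e ee1.
  have C2' := H2 e ee2.
  have := H3 e ee3.
  rewrite opp_row_mx add_row_mx scale_row_mx add_row_mx add0r => /emb_inv C3'.
  exists e; split => //; exists r''.
  exists (x0 + e *: (x0 - x)), r'', (x0 + e *: (x0 - z)), (e *: (0 - w)); split => //.
  congr pair; rewrite scale_row_mx opp_row_mx; congr row_mx;
  by apply/rowP => i; rewrite !mxE; ring.
have [c Hc] := HB cK K0 EPK.
exists (- lsubmx c), (rsubmx c) => x r z w C1x C2z C3zw.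
have : K (row_mx (z - x) w, r) by exists x, r, z, w.
move=> /Hc; rewrite dotp_row dotpBr !dotpNl.
lra.
Qed.


Lemma dotp_bound (R : realType) m (u y : 'rV[R]_m) e :
  (forall i, `|y 0 i| <= e) -> `|dotp u y| <= e * \sum_i `|u 0 i|.
Proof.
move=> hy; rewrite /dotp mulr_sumr; apply: (le_trans (ler_norm_sum _ _ _)).
apply: ler_sum => i _; rewrite normrM mulrC; apply: ler_wpM2r => //.
Qed.

Lemma dotp0r (R : realType) m (u : 'rV[R]_m) : dotp u 0 = 0.
Proof. by rewrite /dotp big1 // => i _; rewrite mxE mulr0. Qed.

Lemma stage3 (R : realType) n q (phi : 'rV[R]_n -> \bar R)
  (Theta : set 'rV[R]_n) (G : 'rV[R]_n -> set 'rV[R]_q)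
  (C1 : set ('rV[R]_n * R^o)) (C2 : set 'rV[R]_n) (C3 : set ('rV[R]_n * 'rV[R]_q))
  (v : R) (x0 : 'rV[R]_n) u ys :
  epigraph phi `<=` closure C1 ->
  convex1 C2 -> Theta `<=` closure C2 ->
  convex2 C3 -> gph G `<=` closure C3 ->
  ri2 C2 x0 -> ri2 (emb C3) (row_mx x0 0) ->
  (forall x r z w, C1 (x, r) -> C2 z -> C3 (z, w) ->
    v <= r - dotp u x + dotp u z - dotp ys w) ->
  forall x (r : R) z w, (phi x <= r%:E)%E -> Theta z -> G z w ->
    v <= r - dotp u x + dotp u z - dotp ys w.
Proof.
move=> eC1 cC2 TC2 cC3 gC3 r2 r3 H.
have cC3e : convex1 (emb C3) by apply: cvx_emb.
have H1 : forall x (r : R) z w, (phi x <= r%:E)%E -> C2 z -> C3 (z, w) ->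
    v <= r - dotp u x + dotp u z - dotp ys w.
  move=> x r z w hx C2z C3zw.
  have cx : closure C1 (x, r : R^o) by apply: eC1.
  have M0 : 0 <= 1 + \sum_i `|u 0 i| by rewrite addr_ge0 // sumr_ge0.
  apply: (lim_e M0) => e e0.
  have [x' [r' [C1x [bx br]]]] := closure_epi cx e0.
  have := H _ _ _ _ C1x C2z C3zw.
  have : `|dotp u (x' - x)| <= e * \sum_i `|u 0 i|.
    by apply: dotp_bound => i; rewrite !mxE; apply: ltW; apply: bx.
  rewrite dotpBr ler_norml => /andP [h1 h2].
  move: br; rewrite ltr_norml => /andP [h3 h4].
  lra.
move=> x r z w hx Tz Gzw.
have TcC2 : clos C2 z by apply: closure_clos; apply: TC2.
have cz := closure_emb (gC3 (z, w) Gzw).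
suff h : v <= (r - dotp u x + dotp u x0) + (dotp u z - dotp u x0 - dotp ys w) by lra.
apply: lim_t => t tr.
have C2t := (LSP cC2 r2 TcC2 tr).1.
have := (LSP cC3e r3 cz tr).1.
rewrite !scale_row_mx add_row_mx => /emb_inv C3t.
have := H1 _ _ _ _ hx C2t C3t.
rewrite !dotpDr !dotpZr dotp0r mulr0 add0r.
lra.
Qed.

Unset Implicit Arguments.

Theorem theorem7p6 (R : realType) (n q : nat) (phi : 'rV[R]_n -> \bar R)
  (Theta : set 'rV[R]_n) (G : 'rV[R]_n -> set 'rV[R]_q) :
  proper_fun phi -> nearly_convex_fun phi ->
  nearly_convex1 Theta -> nearly_convex_map G ->
  ri (edom phi) `&` ri (mdom G) `&` ri Theta !=set0 ->
  ri (mimage G (Theta `&` edom phi)) 0 ->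
  primal_value phi Theta G = dual_value phi Theta G.
Proof.
move=> [_ phip] [C1 [cC1 [C1e eC1]]] [C2 [cC2 [C2T TC2]]] [C3 [cC3 [C3g gC3]]] HA HB0.
have [xf [Txf exf] Gxf] := (ri_sball HB0).1.
have finphi : forall x, (phi x < +oo)%E -> phi x = (fine (phi x))%:E.
  by move=> x hx; rewrite fineK // fin_numE (gt_eqF (phip x)) (lt_eqF hx).
apply/eqP; rewrite eq_le; apply/andP; split; last first.
  (* weak duality *)
  apply: ge_ereal_sup => _ [[u ys] _ <-] /=.
  apply: le_ereal_inf_tmp => _ [x [Tx Gx] <-].
  have [hx|hx] := leP +oo%E (phi x); first by rewrite (@le_anti _ _ (phi x) +oo%E) ?leey ?hx.
  rewrite /h1 (finphi _ hx).
  set r := fine (phi x).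
  have hc : ((dotp u x - r)%:E <= fconj phi u)%E.
    by apply: ereal_sup_ubound; exists x => //; rewrite /= (finphi _ hx).
  have hi : (ereal_inf [set (dotp u p.1 - dotp ys p.2)%:E | p in
       [set p : 'rV[R]_n * 'rV[R]_q | Theta p.1 /\ G p.1 p.2]] <= (dotp u x)%:E)%E.
    by apply: ereal_inf_lbound; exists (x, 0) => //=; rewrite dotp0r subr0.
  have : (- fconj phi u <= (r - dotp u x)%:E)%E.
    by rewrite leeNl -EFinN opprB.
  move=> hc'; apply: le_trans (leeD hc' hi) _.
  by rewrite -EFinD subrK.
have [x0 [r1 r2 r3]] := stage1 phip cC1 C1e eC1 cC2 C2T TC2 cC3 C3g gC3 HA HB0.
have Vf : (primal_value phi Theta G <= phi xf)%E.
  by apply: ereal_inf_lbound; exists xf.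
have Vlt : (primal_value phi Theta G < +oo)%E by apply: le_lt_trans Vf exf.
case EV: (primal_value phi Theta G) => [v| |]; last by rewrite leNye.
  2: by rewrite EV in Vlt.
have Hv : forall x, Theta x -> G x 0 -> (v%:E <= phi x)%E.
  by move=> x Tx Gx; rewrite -EV; apply: ereal_inf_lbound; exists x.
have [u [ys Hc]] := stage2 cC1 C1e cC2 C2T cC3 C3g Hv r1 r2 r3.
have Hall := stage3 eC1 cC2 TC2 cC3 gC3 r2 r3 Hc.
apply: le_trans (ereal_sup_ubound _); last by exists (u, ys).
rewrite /h1.
set I := ereal_inf _.
have lbI : forall x, (phi x < +oo)%E -> ((v - fine (phi x) + dotp u x)%:E <= I)%E.
  move=> x hx; apply: le_ereal_inf_tmp => _ [[z w] [Tz Gzw] <-] /=; rewrite lee_fin.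
  have := Hall x (fine (phi x)) z w _ Tz Gzw.
  by rewrite -finphi // => /(_ (lexx _)); lra.
have ubI : (I <= (dotp u xf)%:E)%E.
  by apply: ereal_inf_lbound; exists (xf, 0) => //=; rewrite dotp0r subr0.
have Ifin : I \is a fin_num.
  by rewrite fin_numE (gt_eqF (lt_le_trans (ltNyr _) (lbI _ exf)))
    (lt_eqF (le_lt_trans ubI (ltry _))).
set i := fine I.
have IE : I = i%:E by rewrite fineK.
have fc : (fconj phi u <= (i - v)%:E)%E.
  apply: ge_ereal_sup => _ [x _ <-].
  have [hx|hx] := leP +oo%E (phi x).
    have -> : phi x = +oo%E by apply: le_anti; rewrite leey hx.
    by rewrite /= leNye.
  rewrite (finphi _ hx) -EFinB lee_fin; have := lbI x hx; rewrite IE lee_fin; lra.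
rewrite IE.
have h : ((v - i)%:E <= - fconj phi u)%E by rewrite leeNr -EFinN opprB.
apply: le_trans (leeD h (lexx (i%:E))).
by rewrite -EFinD subrK.
Qed.
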